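(* Let $0<A_0<A_1$, $0<\sigma<1$ and let $p\ge2$ be an integer. Then the set of $b\in[0,1]$ for which there are infinitely many pairs of integers $0<m<n$ satisfying $$A_0<\frac{b^{p^m}}{\sigma^{n-m}}<A_1$$ is a dense $G_\delta$ subset of $[0,1]$ of full Lebesgue measure. *)

(* Defs.v *)
From Stdlib Require Import Reals Lra List.
Open Scope R_scope.

Definition unit_interval (x : R) : Prop := 0 <= x <= 1.

Definition dense_in_unit (S : R -> Prop) : Prop :=
  forall x eps, unit_interval x -> 0 < eps ->
    exists y, unit_interval y /\ S y /\ Rabs (y - x) < eps.

Definition G_delta_in_unit (S : R -> Prop) : Prop :=
  exists U : nat -> R -> Prop,
    (forall k, open_set (U k)) /\
    (forall x, unit_interval x -> (S x <-> forall k, U k x)).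

Definition lebesgue_null (N : R -> Prop) : Prop :=
  forall eps, 0 < eps ->
    exists a b : nat -> R,
      (forall k, a k <= b k) /\
      (forall x, N x -> exists k, a k < x < b k) /\
      (forall K, sum_f_R0 (fun k => b k - a k) K <= eps).

Definition full_measure_in_unit (S : R -> Prop) : Prop :=
  lebesgue_null (fun x => unit_interval x /\ ~ S x).

Definition good_pair (A0 A1 sigma : R) (p : nat) (b : R) (m n : nat) : Prop :=
  (0 < m)%nat /\ (m < n)%nat /\
  A0 < b ^ (p ^ m) / sigma ^ (n - m) < A1.

Definition inf_many_good_pairs (A0 A1 sigma : R) (p : nat) (b : R) : Prop :=
  ~ exists l : list (nat * nat),
      forall m n, good_pair A0 A1 sigma p b m n -> In (m, n) l.

(* Main.v *)
Require Import Defs.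
From Stdlib Require Import Reals.
From Stdlib Require Import Lra Lia List Classical ZArith ClassicalEpsilon.
Open Scope R_scope.




Definition fl (x : R) (n : nat) : Prop := INR n <= x < INR n + 1.

Lemma fl_ex x : 0 <= x -> exists n, fl x n.
Proof.
  intros Hx. destruct (archimed x) as [H1 H2].
  assert (Hz : (1 <= up x)%Z).
  { assert (0 < up x)%Z by (apply lt_0_IZR; lra). lia. }
  exists (Z.to_nat (up x - 1)). unfold fl.
  rewrite INR_IZR_INZ, Z2Nat.id by lia. rewrite minus_IZR. simpl. lra.
Qed.

Lemma fl_unique x n1 n2 : fl x n1 -> fl x n2 -> n1 = n2.
Proof.
  unfold fl; intros [a b] [c d].
  destruct (Nat.lt_trichotomy n1 n2) as [h|[h|h]]; auto.
  - apply le_INR in h. rewrite S_INR in h. lra.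
  - apply le_INR in h. rewrite S_INR in h. lra.
Qed.

Definition digs (P c : nat) : list nat := seq 0 c ++ seq (S c) (P - S c).

Lemma digs_length P c : (c < P)%nat -> length (digs P c) = (P - 1)%nat.
Proof. intros. unfold digs. rewrite length_app, !length_seq. lia. Qed.

Lemma digs_in P c d : (d < P)%nat -> d <> c -> In d (digs P c).
Proof.
  intros. unfold digs. apply in_or_app.
  destruct (Nat.lt_ge_cases d c).
  - left. apply in_seq. lia.
  - right. apply in_seq. lia.
Qed.

Definition refine (P c : nat) (l : list nat) : list nat :=
  flat_map (fun A => map (fun d => (A * P + d)%nat) (digs P c)) l.

Lemma refine_length P c l : (c < P)%nat -> length (refine P c l) = (length l * (P - 1))%nat.
Proof.
  intros H. induction l as [|a l IH]; simpl; auto.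
  unfold refine in *. simpl. rewrite length_app, length_map, digs_length by auto. lia.
Qed.

Lemma refine_in P c l A d : In A l -> (d < P)%nat -> d <> c -> In (A * P + d)%nat (refine P c l).
Proof.
  intros. unfold refine. apply in_flat_map. exists A. split; auto.
  apply in_map. apply digs_in; auto.
Qed.

Definition good_frac (P c : nat) (z : R) (A : nat) : Prop :=
  INR c <= INR P * (z - INR A) < INR c + 1.

Lemma step P c z A : (1 <= P)%nat -> fl z A -> ~ good_frac P c z A ->
  exists d, (d < P)%nat /\ d <> c /\ fl (INR P * z) (A * P + d)%nat.
Proof.
  intros HP [h1 h2] Hng.
  assert (HP' : 1 <= INR P) by (apply (le_INR 1); auto).
  destruct (fl_ex (INR P * (z - INR A))) as [d [d1 d2]].
  { apply Rmult_le_pos; lra. }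
  exists d. split; [|split].
  - apply INR_lt. assert (INR P * (z - INR A) < INR P * 1) by (apply Rmult_lt_compat_l; lra). lra.
  - intro; subst. apply Hng. split; lra.
  - unfold fl. rewrite plus_INR, mult_INR. split; nra.
Qed.
Lemma cover_iter p s c M y l0 :
  (c < p^s)%nat -> 0 <= y ->
  (forall m A, (M <= m)%nat -> fl (INR p ^ m * y) A -> ~ good_frac (p^s) c (INR p ^ m * y) A) ->
  forall K A0, In A0 l0 -> fl (INR p ^ M * y) A0 ->
  exists A, In A (Nat.iter K (refine (p^s) c) l0) /\ fl (INR p ^ (M + K*s) * y) A.
Proof.
  intros Hc Hy Hbad K. induction K as [|K IH]; intros A0 HA0 Hfl.
  - exists A0. simpl. replace (M + 0)%nat with M by lia. auto.
  - destruct (IH A0 HA0 Hfl) as [A [HA HflA]].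
    assert (h1 : (1 <= p^s)%nat) by lia.
    assert (h2 : (M <= M + K*s)%nat) by lia.
    destruct (step (p^s) c _ A h1 HflA (Hbad _ _ h2 HflA)) as [d [hd1 [hd2 hd3]]].
    exists (A * p^s + d)%nat. split.
    + simpl. apply refine_in; auto.
    + replace (M + S K * s)%nat with ((M + K*s) + s)%nat by lia.
      rewrite pow_add. rewrite pow_INR in hd3.
      replace (INR p ^ (M + K * s) * INR p ^ s * y) with (INR p ^ s * (INR p ^ (M + K * s) * y)) by ring.
      auto.
Qed.

Lemma iter_length P c K l : (c < P)%nat ->
  length (Nat.iter K (refine P c) l) = (length l * (P - 1) ^ K)%nat.
Proof.
  intros H. induction K; simpl.
  - lia.
  - rewrite refine_length by auto. rewrite IHK. lia.
Qed.
Definition ilen (iv : R*R) : R := snd iv - fst iv.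
Fixpoint totlen (l : list (R*R)) : R :=
  match l with nil => 0 | iv :: l => ilen iv + totlen l end.

Fixpoint cat_at (Ls : nat -> list (R*R)) (M k fuel : nat) : R*R :=
  match fuel with
  | O => (0,0)
  | S f => if Nat.ltb k (length (Ls M)) then nth k (Ls M) (0,0)
           else cat_at Ls (S M) (k - length (Ls M)) f
  end.

Section Cat.
Variable Ls : nat -> list (R*R).
Hypothesis Hne : forall M, (1 <= length (Ls M))%nat.

Lemma cat_fuel : forall f1 f2 M k, (k < f1)%nat -> (k < f2)%nat ->
  cat_at Ls M k f1 = cat_at Ls M k f2.
Proof.
  induction f1 as [|f1 IH]; intros f2 M k h1 h2; [lia|].
  destruct f2 as [|f2]; [lia|]. simpl.
  destruct (Nat.ltb k (length (Ls M))) eqn:E; auto.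
  apply Nat.ltb_ge in E. specialize (Hne M). apply IH; lia.
Qed.

Lemma cat_lt M k : (k < length (Ls M))%nat -> cat_at Ls M k (S k) = nth k (Ls M) (0,0).
Proof. intros h. simpl. apply Nat.ltb_lt in h. rewrite h. auto. Qed.

Lemma cat_ge M k : (length (Ls M) <= k)%nat ->
  cat_at Ls M k (S k) = cat_at Ls (S M) (k - length (Ls M)) (S (k - length (Ls M))).
Proof.
  intros h. transitivity (cat_at Ls (S M) (k - length (Ls M)) k).
  - simpl. destruct (Nat.ltb k (length (Ls M))) eqn:E; auto.
    apply Nat.ltb_lt in E. lia.
  - apply cat_fuel; specialize (Hne M); lia.
Qed.

Lemma cat_cover : forall d M r, (r < length (Ls (M + d)))%nat ->
  exists k, cat_at Ls M k (S k) = nth r (Ls (M + d)) (0,0).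
Proof.
  induction d as [|d IH]; intros M r h.
  - exists r. rewrite Nat.add_0_r in *. apply cat_lt; auto.
  - replace (M + S d)%nat with (S M + d)%nat in * by lia.
    destruct (IH (S M) r h) as [k hk].
    exists (length (Ls M) + k)%nat. rewrite cat_ge by lia.
    replace (length (Ls M) + k - length (Ls M))%nat with k by lia. auto.
Qed.

Hypothesis Hnn : forall M iv, In iv (Ls M) -> 0 <= ilen iv.

Lemma sum_zero K : sum_f_R0 (fun _ => 0) K = 0.
Proof. induction K; simpl; lra. Qed.

Lemma totlen_nn l : (forall iv, In iv l -> 0 <= ilen iv) -> 0 <= totlen l.
Proof.
  induction l; simpl; intros H; [lra|].
  assert (0 <= ilen a) by auto. assert (0 <= totlen l) by auto. lra.
Qed.

Lemma nth_sum : forall l K, (forall iv, In iv l -> 0 <= ilen iv) ->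
  sum_f_R0 (fun k => ilen (nth k l (0,0))) K <= totlen l.
Proof.
  induction l as [|a l IH]; intros K H.
  - simpl. rewrite (sum_eq _ (fun _ => 0)).
    + rewrite sum_zero. lra.
    + intros i _. destruct i; unfold ilen; simpl; lra.
  - assert (0 <= totlen l) by (apply totlen_nn; intros; apply H; simpl; auto).
    destruct K as [|K].
    + simpl. lra.
    + rewrite decomp_sum by lia. simpl.
      assert (sum_f_R0 (fun i => ilen (nth i l (0,0))) K <= totlen l)
        by (apply IH; intros; apply H; simpl; auto).
      lra.
Qed.

Variable B : nat -> R.
Hypothesis HB0 : forall M, 0 <= B M.
Hypothesis HBs : forall M, totlen (Ls M) + B (S M) <= B M.

Lemma cat_sum : forall K M, sum_f_R0 (fun k => ilen (cat_at Ls M k (S k))) K <= B M.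
Proof.
  intro K. induction K as [K IH] using lt_wf_ind. intros M.
  pose proof (Hne M) as hn. pose proof (HBs M) as hb. pose proof (HB0 (S M)).
  assert (Ht : forall K', sum_f_R0 (fun k => ilen (nth k (Ls M) (0,0))) K' <= totlen (Ls M))
    by (intros; apply nth_sum; intros; eapply Hnn; eauto).
  destruct (Nat.lt_ge_cases K (length (Ls M))) as [h|h].
  - rewrite (sum_eq _ (fun k => ilen (nth k (Ls M) (0,0)))).
    + specialize (Ht K). lra.
    + intros i hi. rewrite cat_lt by lia. auto.
  - rewrite (tech2 _ (length (Ls M) - 1) K) by lia.
    rewrite (sum_eq _ (fun k => ilen (nth k (Ls M) (0,0))) (length (Ls M) - 1)).
    2:{ intros i hi. rewrite cat_lt by lia. auto. }
    rewrite (sum_eq (fun i => ilen (cat_at Ls M (S (length (Ls M) - 1) + i) (S (S (length (Ls M) - 1) + i)))) (fun i => ilen (cat_at Ls (S M) i (S i)))).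
    2:{ intros i hi. rewrite cat_ge by lia.
      replace (S (length (Ls M) - 1) + i - length (Ls M))%nat with i by lia. auto. }
    specialize (Ht (length (Ls M) - 1)%nat).
    assert (sum_f_R0 (fun i => ilen (cat_at Ls (S M) i (S i))) (K - S (length (Ls M) - 1)) <= B (S M))
      by (apply IH; lia).
    lra.
Qed.
End Cat.
Lemma div_lt_iff a b Q : 0 < Q -> (a / Q < b <-> a < b * Q).
Proof.
  intros h. split; intros H.
  - replace a with (a / Q * Q) by (field; lra). apply Rmult_lt_compat_r; auto.
  - replace (a / Q) with (a * / Q) by auto. replace b with (b * Q * / Q) by (field; lra).
    apply Rmult_lt_compat_r; auto. apply Rinv_0_lt_compat; auto.
Qed.
Lemma lt_div_iff a b Q : 0 < Q -> (b < a / Q <-> b * Q < a).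
Proof.
  intros h. split; intros H.
  - replace a with (a / Q * Q) by (field; lra). apply Rmult_lt_compat_r; auto.
  - replace (a / Q) with (a * / Q) by auto. replace b with (b * Q * / Q) by (field; lra).
    apply Rmult_lt_compat_r; auto. apply Rinv_0_lt_compat; auto.
Qed.
Lemma div_le_iff a b Q : 0 < Q -> (a / Q <= b <-> a <= b * Q).
Proof.
  intros h. split; intros H.
  - replace a with (a / Q * Q) by (field; lra). apply Rmult_le_compat_r; lra.
  - replace (a / Q) with (a * / Q) by auto. replace b with (b * Q * / Q) by (field; lra).
    apply Rmult_le_compat_r; auto. left. apply Rinv_0_lt_compat; auto.
Qed.
Lemma le_div_iff a b Q : 0 < Q -> (b <= a / Q <-> b * Q <= a).
Proof.
  intros h. split; intros H.
  - replace a with (a / Q * Q) by (field; lra). apply Rmult_le_compat_r; lra.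
  - replace (a / Q) with (a * / Q) by auto. replace b with (b * Q * / Q) by (field; lra).
    apply Rmult_le_compat_r; auto. left. apply Rinv_0_lt_compat; auto.
Qed.
Lemma exp_pow x n : exp x ^ n = exp (INR n * x).
Proof.
  induction n; simpl.
  - rewrite Rmult_0_l, exp_0. auto.
  - rewrite IHn, <- exp_plus. f_equal. destruct n; simpl; ring.
Qed.

Lemma params (c0 c1 : R) (p : nat) : c0 < c1 -> (2 <= p)%nat ->
  exists (e : Z) (s c : nat),
    IZR e - c1 < INR c / INR (p ^ s) /\ (INR c + 1) / INR (p ^ s) <= IZR e - c0 /\
    (c + 1 < p ^ s)%nat /\ (1 <= c)%nat.
Proof.
  intros Hc Hp. destruct (archimed c0) as [E1 E2].
  set (e := up c0) in *. set (hi := IZR e - c0). set (lo := Rmax (IZR e - c1) 0).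
  assert (Hlo0 : 0 <= lo) by apply Rmax_r.
  assert (Hlo1 : IZR e - c1 <= lo) by apply Rmax_l.
  assert (Hhl : lo < hi).
  { unfold lo. apply Rmax_lub_lt; unfold hi; lra. }
  destruct (archimed (2 / (hi - lo))) as [N1 _].
  assert (HN : (0 <= up (2 / (hi - lo)))%Z).
  { apply le_IZR. assert (0 < 2 / (hi - lo)) by (apply Rdiv_lt_0_compat; lra). lra. }
  set (s := Z.to_nat (up (2 / (hi - lo)))).
  assert (Hs : 2 / (hi - lo) < INR (p ^ s)).
  { assert (h : (s < p ^ s)%nat) by (apply Nat.pow_gt_lin_r; lia).
    apply lt_INR in h. unfold s in h at 1. rewrite INR_IZR_INZ, Z2Nat.id in h by auto. lra. }
  set (Q := INR (p ^ s)) in *.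
  assert (HQ : 0 < Q).
  { assert (0 < 2 / (hi - lo)) by (apply Rdiv_lt_0_compat; lra). lra. }
  assert (H2Q : 2 / Q < hi - lo).
  { assert (h2 : 2 < Q * (hi - lo)).
    { replace 2 with (2 / (hi - lo) * (hi - lo)) by (field; lra).
      apply Rmult_lt_compat_r; lra. }
    replace (hi - lo) with (Q * (hi - lo) / Q) by (field; lra).
    unfold Rdiv. apply Rmult_lt_compat_r; [apply Rinv_0_lt_compat; lra | lra]. }
  destruct (fl_ex (lo * Q)) as [n [n1 n2]]. { apply Rmult_le_pos; lra. }
  exists e, s, (S n).
  rewrite S_INR.
  assert (hc1 : lo < (INR n + 1) / Q).
  { rewrite lt_div_iff by auto. lra. }
  assert (hc2 : (INR n + 1 + 1) / Q <= lo + 2 / Q).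
  { rewrite div_le_iff by auto. replace ((lo + 2 / Q) * Q) with (lo * Q + 2) by (field; lra). lra. }
  assert (hhi : hi <= 1) by (unfold hi; lra).
  fold Q. unfold hi, lo in *. split; [lra|]. split; [lra|]. split; [|lia].
  apply INR_lt. rewrite plus_INR, S_INR. simpl (INR 1). fold Q.
  assert ((INR n + 1 + 1) / Q < 1) by lra.
  rewrite div_lt_iff in H by auto. lra.
Qed.

Lemma good_pair_of (A0 A1 sigma : R) (p : nat) (e : Z) (s c : nat) (m A : nat) (y : R) :
  0 < A0 -> A0 < A1 -> 0 < sigma -> sigma < 1 ->
  IZR e - ln A1 / (- ln sigma) < INR c / INR (p ^ s) ->
  (INR c + 1) / INR (p ^ s) <= IZR e - ln A0 / (- ln sigma) ->
  (1 <= p ^ s)%nat ->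
  (0 < m)%nat -> fl (INR p ^ m * y) A -> good_frac (p ^ s) c (INR p ^ m * y) A ->
  (1 <= Z.of_nat A + e)%Z ->
  good_pair A0 A1 sigma p (exp (- (- ln sigma) * y)) m (m + Z.to_nat (Z.of_nat A + e)).
Proof.
  intros HA0 HA01 hs0 hs1 H1 H2 HP Hm Hfl Hg He.
  assert (HA1 : 0 < A1) by lra.
  set (L := - ln sigma) in *.
  assert (HL : 0 < L). { unfold L. assert (ln sigma < ln 1) by (apply ln_increasing; lra). rewrite ln_1 in H. lra. }
  set (k := Z.to_nat (Z.of_nat A + e)).
  assert (Hk : INR k = INR A + IZR e).
  { unfold k. rewrite INR_IZR_INZ, Z2Nat.id by lia. rewrite plus_IZR, <- INR_IZR_INZ. auto. }
  unfold good_pair. split; [auto|]. split; [lia|].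
  replace (m + k - m)%nat with k by lia.
  assert (Hsig : sigma = exp (- L)) by (unfold L; rewrite Ropp_involutive, exp_ln; auto).
  rewrite Hsig, !exp_pow. unfold Rdiv. rewrite <- exp_Ropp, <- exp_plus.
  rewrite pow_INR.
  set (Q := INR (p ^ s)) in *.
  assert (HQ : 0 < Q) by (unfold Q; apply (lt_INR 0); lia).
  destruct Hg as [g1 g2]. fold Q in g1, g2.
  set (f := INR p ^ m * y - INR A) in *.
  assert (f1 : INR c / Q <= f).
  { rewrite div_le_iff by auto. lra. }
  assert (f2 : f < (INR c + 1) / Q).
  { rewrite lt_div_iff by auto. lra. }
  replace (INR (p ^ m)) with (INR p ^ m) by (rewrite pow_INR; auto).
  replace (INR p ^ m * (- L * y) + - (INR k * - L)) with (L * (IZR e - f)).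
  2:{ rewrite Hk. unfold f. ring. }
  rewrite <- (exp_ln A0) at 1 by auto. rewrite <- (exp_ln A1) by auto.
  split; apply exp_increasing.
  - replace (ln A0) with (L * (ln A0 / L)) by (field; lra).
    apply Rmult_lt_compat_l; auto. lra.
  - replace (ln A1) with (L * (ln A1 / L)) by (field; lra).
    apply Rmult_lt_compat_l; auto. lra.
Qed.
Lemma big_pow (p : nat) (T : R) : (2 <= p)%nat -> exists N, forall n, (N <= n)%nat -> T < INR p ^ n.
Proof.
  intros Hp. destruct (archimed (Rabs T)) as [h _].
  assert (HN : (0 <= up (Rabs T))%Z).
  { apply le_IZR. pose proof (Rabs_pos T). lra. }
  exists (Z.to_nat (up (Rabs T))). intros n hn.
  assert (h1 : (n < p ^ n)%nat) by (apply Nat.pow_gt_lin_r; lia).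
  apply lt_INR in h1. rewrite pow_INR in h1.
  apply le_INR in hn. rewrite INR_IZR_INZ, Z2Nat.id in hn by auto.
  pose proof (Rle_abs T). lra.
Qed.

Lemma pow_mono (p : nat) m n : (1 <= p)%nat -> (m <= n)%nat -> INR p ^ m <= INR p ^ n.
Proof. intros. apply Rle_pow; auto. apply (le_INR 1); auto. Qed.

Lemma exp_ge x : 1 + x <= exp x.
Proof. destruct (Req_dec x 0). subst. rewrite exp_0. lra. left. apply exp_ineq1; auto. Qed.

Lemma exp_lip u v : 0 <= u -> 0 <= v -> Rabs (exp (- u) - exp (- v)) <= Rabs (u - v).
Proof.
  assert (K : forall u v, 0 <= u -> u <= v -> exp (-u) - exp (-v) <= v - u).
  { intros a b ha hab.
    replace (exp (-b)) with (exp (-a) * exp (a - b)) by (rewrite <- exp_plus; f_equal; ring).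
    pose proof (exp_ge (a - b)).
    assert (exp (-a) <= 1). { rewrite <- exp_0. destruct (Req_dec a 0). subst. rewrite Ropp_0. lra. left. apply exp_increasing. lra. }
    assert (0 < exp (-a)) by apply exp_pos. nra. }
  intros hu hv. destruct (Rle_dec u v).
  - assert (exp (-v) <= exp (-u)).
    { destruct (Req_dec u v). subst; lra. left; apply exp_increasing; lra. }
    rewrite (Rabs_left1 (u - v)) by lra. rewrite Rabs_pos_eq by lra. specialize (K u v hu r). lra.
  - assert (exp (-u) <= exp (-v)) by (left; apply exp_increasing; lra).
    rewrite (Rabs_left1 (exp (-u) - exp (-v))) by lra. rewrite Rabs_pos_eq by lra.
    assert (hvu : v <= u) by lra. specialize (K v u hv hvu). lra.
Qed.

Lemma inf_of_goods (A0 A1 sigma : R) (p : nat) (e : Z) (s c : nat) (y : R) :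
  0 < A0 -> A0 < A1 -> 0 < sigma -> sigma < 1 -> (2 <= p)%nat ->
  IZR e - ln A1 / (- ln sigma) < INR c / INR (p ^ s) ->
  (INR c + 1) / INR (p ^ s) <= IZR e - ln A0 / (- ln sigma) ->
  (1 <= p ^ s)%nat -> 0 < y ->
  (forall M, exists m A, (M <= m)%nat /\ fl (INR p ^ m * y) A /\ good_frac (p ^ s) c (INR p ^ m * y) A) ->
  inf_many_good_pairs A0 A1 sigma p (exp (- (- ln sigma) * y)).
Proof.
  intros HA0 HA01 hs0 hs1 hp H1 H2 HP hy Hg [l Hl].
  set (N0 := S (list_max (map fst l))).
  destruct (big_pow p ((Rabs (IZR (1 - e)) + 1) / y) hp) as [M1 HM1].
  destruct (Hg (N0 + M1 + 1)%nat) as [m [A [hm [hfl hgood]]]].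
  assert (HT : Rabs (IZR (1 - e)) + 1 <= INR p ^ m * y).
  { specialize (HM1 m ltac:(lia)). rewrite div_lt_iff in HM1 by auto. lra. }
  assert (He : (1 <= Z.of_nat A + e)%Z).
  { destruct hfl as [f1 f2]. pose proof (Rle_abs (IZR (1 - e))).
    assert (IZR (1 - e) < IZR (Z.of_nat A)) by (rewrite <- INR_IZR_INZ; lra).
    apply lt_IZR in H0. lia. }
  pose proof (good_pair_of A0 A1 sigma p e s c m A y HA0 HA01 hs0 hs1 H1 H2 HP ltac:(lia) hfl hgood He) as G.
  apply Hl in G. apply (in_map fst) in G. simpl in G.
  assert (Hle : Forall (fun k => (k <= list_max (map fst l))%nat) (map fst l)) by (apply list_max_le; auto).
  rewrite Forall_forall in Hle. apply Hle in G. unfold N0 in hm. lia.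
Qed.

Lemma bad_of_not_inf (A0 A1 sigma : R) (p : nat) (e : Z) (s c : nat) (y : R) :
  0 < A0 -> A0 < A1 -> 0 < sigma -> sigma < 1 -> (2 <= p)%nat ->
  IZR e - ln A1 / (- ln sigma) < INR c / INR (p ^ s) ->
  (INR c + 1) / INR (p ^ s) <= IZR e - ln A0 / (- ln sigma) ->
  (1 <= p ^ s)%nat -> 0 < y ->
  ~ inf_many_good_pairs A0 A1 sigma p (exp (- (- ln sigma) * y)) ->
  exists M, forall m A, (M <= m)%nat -> fl (INR p ^ m * y) A -> ~ good_frac (p ^ s) c (INR p ^ m * y) A.
Proof.
  intros HA0 HA01 hs0 hs1 hp H1 H2 HP hy Hn.
  apply NNPP. intro Hc. apply Hn. eapply inf_of_goods; eauto.
  intro M. apply NNPP. intro H. apply Hc. exists M. intros m A hm hfl hg.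
  apply H. exists m, A. auto.
Qed.
Fixpoint G (P j : nat) : nat := match j with O => O | S j => (P * G P j + 1)%nat end.

Lemma G_eq P j : INR P ^ j = (INR P - 1) * INR (G P j) + 1.
Proof.
  induction j; simpl. lra. rewrite plus_INR, mult_INR, IHj. simpl. ring.
Qed.

Lemma periodic (p s c a A0 : nat) : (c + 1 < p ^ s)%nat -> (2 <= p)%nat ->
  forall M, exists m A, (M <= m)%nat /\
    fl (INR p ^ m * ((INR A0 + INR c / (INR (p ^ s) - 1)) / INR p ^ a)) A /\
    good_frac (p ^ s) c (INR p ^ m * ((INR A0 + INR c / (INR (p ^ s) - 1)) / INR p ^ a)) A.
Proof.
  intros Hc Hp M.
  assert (Hs : (1 <= s)%nat) by (destruct s; simpl in Hc; lia).
  set (P := (p ^ s)%nat) in *.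
  assert (HP : INR c + 1 < INR P) by (rewrite <- S_INR; apply lt_INR; lia).
  assert (Hc0 : 0 <= INR c) by apply pos_INR.
  assert (Hpa : 0 < INR p ^ a) by (apply pow_lt; apply (lt_INR 0); lia).
  set (r := INR c / (INR P - 1)).
  exists (a + s * M)%nat, (P ^ M * A0 + c * G P M)%nat.
  assert (E : INR p ^ (a + s * M) * ((INR A0 + r) / INR p ^ a) = INR (P ^ M * A0 + c * G P M) + r).
  { rewrite pow_add, pow_mult, plus_INR, !mult_INR, pow_INR.
    replace (INR p ^ s) with (INR P) by (unfold P; rewrite pow_INR; auto).
    rewrite (G_eq P M). unfold r. field. split; lra. }
  rewrite E. split; [nia|].
  assert (r0 : 0 <= r) by (unfold r; apply Rmult_le_pos; [lra | left; apply Rinv_0_lt_compat; lra]).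
  assert (r1 : r < 1) by (unfold r; rewrite div_lt_iff by lra; lra).
  unfold fl, good_frac. replace (INR (P ^ M * A0 + c * G P M) + r - INR (P ^ M * A0 + c * G P M)) with r by ring.
  split; [lra|]. unfold r.
  replace (INR P * (INR c / (INR P - 1))) with (INR c + INR c / (INR P - 1)) by (field; lra).
  split.
  - assert (0 <= INR c / (INR P - 1)) by (apply Rmult_le_pos; [lra | left; apply Rinv_0_lt_compat; lra]). lra.
  - assert (INR c / (INR P - 1) < 1) by (rewrite div_lt_iff by lra; lra). lra.
Qed.
Lemma L_pos sigma : 0 < sigma -> sigma < 1 -> 0 < - ln sigma.
Proof. intros. assert (ln sigma < ln 1) by (apply ln_increasing; lra). rewrite ln_1 in H1. lra. Qed.

Lemma c01 A0 A1 sigma : 0 < A0 -> A0 < A1 -> 0 < sigma -> sigma < 1 ->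
  ln A0 / (- ln sigma) < ln A1 / (- ln sigma).
Proof.
  intros. pose proof (L_pos sigma H1 H2). assert (ln A0 < ln A1) by (apply ln_increasing; lra).
  unfold Rdiv. apply Rmult_lt_compat_r; auto. apply Rinv_0_lt_compat; auto.
Qed.

Lemma density_part A0 A1 sigma p : 0 < A0 -> A0 < A1 -> 0 < sigma -> sigma < 1 -> (2 <= p)%nat ->
  dense_in_unit (fun b => unit_interval b /\ inf_many_good_pairs A0 A1 sigma p b).
Proof.
  intros HA0 HA01 hs0 hs1 hp.
  pose proof (L_pos sigma hs0 hs1) as HL.
  destruct (params _ _ p (c01 A0 A1 sigma HA0 HA01 hs0 hs1) hp) as [e [s [c [H1 [H2 [H3 H4]]]]]].
  set (L := - ln sigma) in *.
  intros x eps hx heps.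
  set (eta := Rmin eps 1 / 4).
  assert (he0 : 0 < eta) by (unfold eta; apply Rmin_case; lra).
  assert (he1 : eta <= 1/4) by (unfold eta; pose proof (Rmin_r eps 1); lra).
  assert (he2 : eta <= eps/4) by (unfold eta; pose proof (Rmin_l eps 1); lra).
  destruct hx as [hx0 hx1].
  set (b1 := if Rle_dec x (1/2) then x + eta else x - eta).
  assert (hb1 : 0 < b1 < 1 /\ Rabs (b1 - x) <= eta).
  { unfold b1. destruct (Rle_dec x (1/2)).
    - replace (x + eta - x) with eta by ring. rewrite Rabs_pos_eq; lra.
    - replace (x - eta - x) with (- eta) by ring. rewrite Rabs_Ropp, Rabs_pos_eq; lra. }
  destruct hb1 as [[hb10 hb11] hb1x].
  set (y0 := - ln b1 / L).
  assert (hy0 : 0 < y0).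
  { unfold y0. assert (ln b1 < ln 1) by (apply ln_increasing; lra). rewrite ln_1 in H.
    unfold Rdiv. apply Rmult_lt_0_compat; [lra | apply Rinv_0_lt_compat; auto]. }
  assert (Eb1 : exp (- (L * y0)) = b1).
  { unfold y0. replace (- (L * (- ln b1 / L))) with (ln b1) by (field; lra). apply exp_ln; auto. }
  destruct (big_pow p (L / eta) hp) as [a Ha]. specialize (Ha a (Nat.le_refl a)).
  assert (Hpa : 0 < INR p ^ a) by (apply pow_lt; apply (lt_INR 0); lia).
  destruct (fl_ex (INR p ^ a * y0)) as [B0 [hB1 hB2]]. { apply Rmult_le_pos; lra. }
  set (r := INR c / (INR (p ^ s) - 1)).
  assert (HP : INR c + 1 < INR (p ^ s)) by (rewrite <- S_INR; apply lt_INR; lia).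
  assert (Hc1 : 1 <= INR c) by (apply (le_INR 1); auto).
  assert (r0 : 0 < r) by (unfold r; apply Rdiv_lt_0_compat; lra).
  assert (r1 : r < 1) by (unfold r; rewrite div_lt_iff by lra; lra).
  set (y := (INR B0 + r) / INR p ^ a).
  assert (Ey : INR p ^ a * y = INR B0 + r) by (unfold y; field; lra).
  assert (hy : 0 < y).
  { unfold y. apply Rdiv_lt_0_compat; auto. pose proof (pos_INR B0). lra. }
  exists (exp (- L * y)). split; [|split].
  - split; [left; apply exp_pos|]. left. rewrite <- exp_0. apply exp_increasing. nra.
  - split.
    + split; [left; apply exp_pos|]. left. rewrite <- exp_0. apply exp_increasing. nra.
    + apply (inf_of_goods A0 A1 sigma p e s c y); auto; try lia.
      apply (periodic p s c a B0); lia.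
  - assert (Hyy : L * Rabs (y - y0) < eta).
    { assert (h1 : Rabs (INR p ^ a * y - INR p ^ a * y0) < 1).
      { rewrite Ey. apply Rabs_def1; lra. }
      rewrite <- Rmult_minus_distr_l, Rabs_mult, (Rabs_pos_eq (INR p ^ a)) in h1 by lra.
      rewrite div_lt_iff in Ha by lra.
      pose proof (Rabs_pos (y - y0)). nra. }
    assert (Hl : Rabs (exp (- (L * y)) - exp (- (L * y0))) <= Rabs (L * y - L * y0)).
    { apply exp_lip; nra. }
    rewrite <- Rmult_minus_distr_l, Rabs_mult, (Rabs_pos_eq L) in Hl by lra.
    rewrite Eb1 in Hl. replace (- L * y) with (- (L * y)) by ring.
    replace (exp (- (L * y)) - x) with ((exp (- (L * y)) - b1) + (b1 - x)) by ring.
    eapply Rle_lt_trans. apply Rabs_triang. lra.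
Qed.
Lemma open_pre (g : R -> R) lo hi x : continuity_pt g x -> lo < g x < hi ->
  exists d : posreal, forall y, Rabs (y - x) < d -> lo < g y < hi.
Proof.
  intros Hc [h1 h2].
  set (eps := Rmin (g x - lo) (hi - g x)).
  assert (He : 0 < eps) by (unfold eps; apply Rmin_case; lra).
  destruct (Hc eps He) as [alp [Ha Hy]].
  exists (mkposreal alp Ha). intros y hy. simpl in hy.
  destruct (Req_dec y x). { subst. lra. }
  assert (hd : R_dist (g y) (g x) < eps).
  { apply (Hy y). split. split. constructor. auto. auto. }
  unfold R_dist in hd. apply Rabs_def2 in hd.
  pose proof (Rmin_l (g x - lo) (hi - g x)). pose proof (Rmin_r (g x - lo) (hi - g x)).
  fold eps in H0, H1. lra.
Qed.

Lemma gdelta_part A0 A1 sigma p : 0 < sigma ->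
  G_delta_in_unit (fun b => unit_interval b /\ inf_many_good_pairs A0 A1 sigma p b).
Proof.
  intros hs0.
  exists (fun k x => exists m n, (k <= n)%nat /\ good_pair A0 A1 sigma p x m n). split.
  - intros k x [m [n [hk [h1 [h2 h3]]]]].
    set (g := fun y => y ^ (p ^ m) / sigma ^ (n - m)).
    assert (Hc : continuity_pt g x).
    { apply (continuity_pt_div (fun y => y ^ (p ^ m)) (fct_cte (sigma ^ (n - m)))).
      - apply derivable_continuous_pt. apply derivable_pt_pow.
      - apply continuity_pt_const. intros a b. auto.
      - unfold fct_cte. apply pow_nonzero. lra. }
    destruct (open_pre g A0 A1 x Hc h3) as [d Hd].
    exists d. intros y hy. exists m, n. split; auto. split; auto. split; auto. apply Hd. auto.
  - intros x hx. split.
    + intros [_ Hinf] k. apply NNPP. intro Hn. apply Hinf.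
      exists (list_prod (seq 0 k) (seq 0 k)). intros m n Hg.
      assert (n < k)%nat.
      { destruct (Nat.lt_ge_cases n k); auto. exfalso. apply Hn. exists m, n. auto. }
      destruct Hg as [g1 [g2 _]]. apply in_prod; apply in_seq; lia.
    + intros H. split; auto. intros [l Hl].
      destruct (H (S (list_max (map snd l)))) as [m [n [hk Hg]]].
      apply Hl in Hg. apply (in_map snd) in Hg. simpl in Hg.
      assert (Hle : Forall (fun k => (k <= list_max (map snd l))%nat) (map snd l)) by (apply list_max_le; auto).
      rewrite Forall_forall in Hle. apply Hle in Hg. lia.
Qed.
Definition ivl (L : R) (p m A : nat) : R * R :=
  (exp (- (L * ((INR A + 1) / INR p ^ m))),
   2 * exp (- (L * (INR A / INR p ^ m))) - exp (- (L * ((INR A + 1) / INR p ^ m)))).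

Lemma ivl_len L p m A : 0 < L -> (1 <= p)%nat ->
  0 <= ilen (ivl L p m A) <= 2 * (L / INR p ^ m).
Proof.
  intros HL Hp. unfold ivl, ilen; simpl.
  assert (Hpm : 0 < INR p ^ m) by (apply pow_lt; apply (lt_INR 0); lia).
  assert (HA : 0 <= INR A) by apply pos_INR.
  set (u := L * (INR A / INR p ^ m)). set (v := L * ((INR A + 1) / INR p ^ m)).
  assert (hu : 0 <= u) by (unfold u; apply Rmult_le_pos; [lra|]; apply Rmult_le_pos; [lra| left; apply Rinv_0_lt_compat; lra]).
  assert (huv : v - u = L / INR p ^ m) by (unfold u, v; field; lra).
  assert (hv : 0 <= v) by (assert (0 < L / INR p ^ m) by (apply Rdiv_lt_0_compat; lra); lra).
  assert (exp (- v) <= exp (- u)) by (left; apply exp_increasing; assert (0 < L / INR p ^ m) by (apply Rdiv_lt_0_compat; lra); lra).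
  pose proof (exp_lip u v hu hv).
  assert (0 < L / INR p ^ m) by (apply Rdiv_lt_0_compat; lra).
  rewrite (Rabs_pos_eq (exp (- u) - exp (- v))) in H0 by lra. rewrite (Rabs_left1 (u - v)) in H0 by lra. lra.
Qed.

Lemma ivl_mem L p m A y : 0 < L -> (1 <= p)%nat -> fl (INR p ^ m * y) A ->
  fst (ivl L p m A) < exp (- (L * y)) < snd (ivl L p m A).
Proof.
  intros HL Hp [f1 f2]. unfold ivl; simpl.
  assert (Hpm : 0 < INR p ^ m) by (apply pow_lt; apply (lt_INR 0); lia).
  assert (y1 : INR A / INR p ^ m <= y) by (rewrite div_le_iff by lra; lra).
  assert (y2 : y < (INR A + 1) / INR p ^ m) by (rewrite lt_div_iff by lra; lra).
  assert (e1 : exp (- (L * ((INR A + 1) / INR p ^ m))) < exp (- (L * y)))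
    by (apply exp_increasing; nra).
  assert (e2 : exp (- (L * y)) <= exp (- (L * (INR A / INR p ^ m)))).
  { destruct y1 as [y1|y1]. left; apply exp_increasing; nra. rewrite y1. lra. }
  lra.
Qed.

Lemma totlen_map_bound (f : nat -> R * R) (w : R) l :
  (forall A, ilen (f A) <= w) -> totlen (map f l) <= INR (length l) * w.
Proof.
  intros H. induction l as [|a l IH]. simpl. lra.
  cbn [map totlen length]. rewrite S_INR. specialize (H a). lra.
Qed.

Lemma nat_above T : exists n : nat, T < INR n.
Proof.
  destruct (archimed (Rabs T)) as [h _].
  assert (HN : (0 <= up (Rabs T))%Z).
  { apply le_IZR. pose proof (Rabs_pos T). lra. }
  exists (Z.to_nat (up (Rabs T))). rewrite INR_IZR_INZ, Z2Nat.id by auto.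
  pose proof (Rle_abs T). lra.
Qed.

Lemma cat_nn (Ls : nat -> list (R*R)) : (forall M iv, In iv (Ls M) -> 0 <= ilen iv) ->
  forall f M k, 0 <= ilen (cat_at Ls M k f).
Proof.
  intros H f. induction f as [|f IH]; intros M k; simpl.
  - unfold ilen; simpl; lra.
  - destruct (Nat.ltb k (length (Ls M))) eqn:E; auto.
    apply Nat.ltb_lt in E. eapply H. apply nth_In. auto.
Qed.
Lemma level_bound (L : R) (p s J M K : nat) : 0 < L -> (2 <= p)%nat -> (1 <= p ^ s)%nat ->
  INR ((J * p ^ M + 1) * (p ^ s - 1) ^ K) * (2 * (L / INR p ^ (M + K * s)))
  <= 2 * L * (INR J + 1) * ((INR (p ^ s) - 1) / INR (p ^ s)) ^ K.
Proof.
  intros HL Hp HP.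
  assert (HpM : 1 <= INR p ^ M).
  { apply pow_R1_Rle. apply (le_INR 1). lia. }
  assert (HPr : 1 <= INR (p ^ s)) by (apply (le_INR 1); auto).
  rewrite mult_INR, plus_INR, mult_INR, !pow_INR, minus_INR by auto. rewrite <- pow_INR. simpl (INR 1).
  rewrite pow_add, (Nat.mul_comm K s), pow_mult, <- (pow_INR p s).
  set (Q := INR (p ^ s)) in *. set (pM := INR p ^ M) in *.
  unfold Rdiv at 2. rewrite Rpow_mult_distr, pow_inv.
  replace (INR (p ^ M)) with pM by (unfold pM; symmetry; apply pow_INR).
  assert (HQK : 0 < Q ^ K) by (apply pow_lt; lra).
  assert (HQ1 : 0 <= (Q - 1) ^ K) by (apply pow_le; lra).
  replace ((INR J * pM + 1) * (Q - 1) ^ K * (2 * (L / (pM * Q ^ K))))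
    with (2 * L * (Q - 1) ^ K * / Q ^ K * ((INR J * pM + 1) / pM)) by (field; lra).
  replace (2 * L * (INR J + 1) * ((Q - 1) ^ K * / Q ^ K)) with (2 * L * (Q - 1) ^ K * / Q ^ K * (INR J + 1)) by ring.
  apply Rmult_le_compat_l.
  - apply Rmult_le_pos; [|left; apply Rinv_0_lt_compat; auto]. apply Rmult_le_pos; lra.
  - rewrite div_le_iff by lra. pose proof (pos_INR J). nra.
Qed.
Lemma measure_part A0 A1 sigma p : 0 < A0 -> A0 < A1 -> 0 < sigma -> sigma < 1 -> (2 <= p)%nat ->
  full_measure_in_unit (fun b => unit_interval b /\ inf_many_good_pairs A0 A1 sigma p b).
Proof.
  intros HA0 HA01 hs0 hs1 hp.
  pose proof (L_pos sigma hs0 hs1) as HL.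
  destruct (params _ _ p (c01 A0 A1 sigma HA0 HA01 hs0 hs1) hp) as [e [s [c [H1 [H2 [H3 H4]]]]]].
  set (L := - ln sigma) in *.
  unfold full_measure_in_unit, lebesgue_null. intros eps heps.
  assert (HP1 : (1 <= p ^ s)%nat) by lia.
  assert (HQ : INR c + 1 < INR (p ^ s)) by (rewrite <- S_INR; apply lt_INR; lia).
  assert (Hc1 : 1 <= INR c) by (apply (le_INR 1); auto).
  set (x := (INR (p ^ s) - 1) / INR (p ^ s)).
  assert (hx : 0 <= x < 1).
  { unfold x. split. apply Rmult_le_pos; [lra| left; apply Rinv_0_lt_compat; lra].
    rewrite div_lt_iff by lra. lra. }
  destruct (nat_above (12 / (L * eps))) as [J HJ].
  set (d0 := exp (- (L * INR J))).
  assert (Hd0p : 0 < d0) by apply exp_pos.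
  assert (Hd0 : d0 < eps / 12).
  { unfold d0. rewrite exp_Ropp. pose proof (exp_ge (L * INR J)).
    assert (12 / eps < L * INR J).
    { rewrite div_lt_iff in HJ by nra. rewrite div_lt_iff by lra. nra. }
    assert (0 < exp (L * INR J)) by apply exp_pos.
    rewrite <- (Rinv_inv (eps / 12)). apply Rinv_lt_contravar.
    - apply Rmult_lt_0_compat; auto. apply Rinv_0_lt_compat; lra.
    - replace (/ (eps / 12)) with (12 / eps) by (field; lra). lra. }
  assert (HK : forall M, exists K, 2 * L * (INR J + 1) * x ^ K < eps / 2 ^ (M + 2)).
  { intro M. assert (h2 : 0 < 2 ^ (M + 2)) by (apply pow_lt; lra).
    assert (hw : 0 < 2 * L * (INR J + 1)) by (pose proof (pos_INR J); nra).
    destruct (pow_lt_1_zero x ltac:(rewrite Rabs_pos_eq; lra) (eps / 2 ^ (M + 2) / (2 * L * (INR J + 1))))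
      as [K HK].
    { apply Rdiv_lt_0_compat; auto. apply Rdiv_lt_0_compat; auto. }
    exists K. specialize (HK K (Nat.le_refl K)). rewrite Rabs_pos_eq in HK by (apply pow_le; lra).
    rewrite lt_div_iff in HK by auto. lra. }
  set (Kf := fun M => proj1_sig (constructive_indefinite_description _ (HK M))).
  assert (HKf : forall M, 2 * L * (INR J + 1) * x ^ (Kf M) < eps / 2 ^ (M + 2))
    by (intro M; unfold Kf; destruct (constructive_indefinite_description _ (HK M)); auto).
  clearbody Kf.
  set (lst := fun M => Nat.iter (Kf M) (refine (p ^ s) c) (seq 0 (J * p ^ M + 1))).
  set (lev := fun M => (M + Kf M * s)%nat).
  set (Ls := fun M => match M with
                      | O => (0,0) :: (- d0, 2 * d0) :: (1 - eps / 8, 1 + eps / 8) :: nil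
                      | S M' => (0,0) :: map (ivl L p (lev M')) (lst M') end).
  assert (Hne : forall M, (1 <= length (Ls M))%nat) by (intros [|M]; simpl; lia).
  assert (Hnn : forall M iv, In iv (Ls M) -> 0 <= ilen iv).
  { intros [|M] iv Hin; simpl in Hin.
    - destruct Hin as [<-|[<-|[<-|[]]]]; unfold ilen; simpl; lra.
    - destruct Hin as [<-|Hin]. unfold ilen; simpl; lra.
      apply in_map_iff in Hin. destruct Hin as [A [<- _]]. apply ivl_len; auto; lia. }
  set (B := fun M => eps / 2 ^ M).
  assert (HB0 : forall M, 0 <= B M) by (intro M; unfold B; left; apply Rdiv_lt_0_compat; auto; apply pow_lt; lra).
  assert (HBs : forall M, totlen (Ls M) + B (S M) <= B M).
  { intros [|M]; unfold B.
    - simpl. unfold ilen; simpl. lra.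
    - cbn [Ls totlen]. unfold ilen at 1; simpl fst; simpl snd.
      assert (Ht : totlen (map (ivl L p (lev M)) (lst M)) <= INR (length (lst M)) * (2 * (L / INR p ^ (lev M)))).
      { apply totlen_map_bound. intro A. apply ivl_len; auto; lia. }
      unfold lst in Ht at 2. rewrite iter_length in Ht by lia. rewrite length_seq in Ht.
      pose proof (level_bound L p s J M (Kf M) HL hp HP1) as Hlb. fold x in Hlb.
      unfold lev in Ht |- *. specialize (HKf M).
      replace (eps / 2 ^ (S (S M))) with (eps / 2 ^ (M + 2)) by (f_equal; f_equal; lia).
      replace (eps / 2 ^ (S M)) with (2 * (eps / 2 ^ (M + 2))).
      2:{ replace (M + 2)%nat with (S (S M)) by lia. simpl. field. apply pow_nonzero. lra. }
      lra. }
  exists (fun k => fst (cat_at Ls 0 k (S k))), (fun k => snd (cat_at Ls 0 k (S k))).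
  split; [|split].
  - intro k. pose proof (cat_nn Ls Hnn (S k) 0 k). unfold ilen in H. lra.
  - intros y [hy Hns].
    assert (Find : forall M r, (r < length (Ls M))%nat -> fst (nth r (Ls M) (0,0)) < y < snd (nth r (Ls M) (0,0)) ->
              exists k, fst (cat_at Ls 0 k (S k)) < y < snd (cat_at Ls 0 k (S k))).
    { intros M r hr hin. destruct (cat_cover Ls Hne M 0 r hr) as [k hk]. exists k. rewrite hk. auto. }
    destruct hy as [hy0 hy1].
    destruct (Rle_dec y d0) as [hyd|hyd].
    { apply (Find 0%nat 1%nat). simpl; lia. simpl. lra. }
    destruct (Req_dec y 1) as [hy1'|hy1'].
    { apply (Find 0%nat 2%nat). simpl; lia. simpl. lra. }
    set (z := - ln y / L).
    assert (hyp : 0 < y) by lra.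
    assert (Ez : exp (- L * z) = y).
    { unfold z. replace (- L * (- ln y / L)) with (ln y) by (field; lra). apply exp_ln; auto. }
    assert (hz : 0 < z).
    { unfold z. assert (ln y < ln 1) by (apply ln_increasing; lra). rewrite ln_1 in H.
      apply Rdiv_lt_0_compat; lra. }
    assert (hzJ : z < INR J).
    { unfold z. assert (ln d0 < ln y) by (apply ln_increasing; lra). unfold d0 in H. rewrite ln_exp in H.
      rewrite div_lt_iff by lra. lra. }
    assert (Hni : ~ inf_many_good_pairs A0 A1 sigma p (exp (- L * z))).
    { rewrite Ez. intro Hi. apply Hns. split; [split; lra | auto]. }
    destruct (bad_of_not_inf A0 A1 sigma p e s c z HA0 HA01 hs0 hs1 hp H1 H2 HP1 hz Hni) as [M HM].
    assert (HpM : 0 < INR p ^ M) by (apply pow_lt; apply (lt_INR 0); lia).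
    destruct (fl_ex (INR p ^ M * z)) as [A0' hA0']. { nra. }
    assert (Hin0 : In A0' (seq 0 (J * p ^ M + 1))).
    { apply in_seq. split; [lia|]. destruct hA0' as [f1 f2].
      assert (INR A0' < INR (J * p ^ M)) by (rewrite mult_INR, pow_INR; nra).
      apply INR_lt in H. lia. }
    destruct (cover_iter p s c M z _ ltac:(lia) ltac:(lra) HM (Kf M) A0' Hin0 hA0') as [A [HA HflA]].
    pose proof (ivl_mem L p (lev M) A z HL ltac:(lia) HflA) as Hmem.
    replace (- (L * z)) with (- L * z) in Hmem by ring. rewrite Ez in Hmem.
    assert (HinL : In (ivl L p (lev M) A) (map (ivl L p (lev M)) (lst M))) by (apply in_map; auto).
    destruct (In_nth _ _ (0,0) HinL) as [r [hr1 hr2]].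
    apply (Find (S M) (S r)).
    + simpl. lia.
    + simpl. rewrite hr2. auto.
  - intro K. pose proof (cat_sum Ls Hne Hnn B HB0 HBs K 0) as HS.
    replace (B 0%nat) with eps in HS by (unfold B; simpl; field). exact HS.
Qed.

Theorem mainTheorem2 (A0 A1 sigma : R) (p : nat)
  (hA0 : 0 < A0) (hA01 : A0 < A1)
  (hs0 : 0 < sigma) (hs1 : sigma < 1) (hp : (2 <= p)%nat) :
  let S := fun b => unit_interval b /\ inf_many_good_pairs A0 A1 sigma p b in
  dense_in_unit S /\ G_delta_in_unit S /\ full_measure_in_unit S.
Proof.
  intros S. split; [|split].
  - apply density_part; auto.
  - apply gdelta_part; auto.
  - apply measure_part; auto.
Qed.
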